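(* Let $E$ be an irreducible IL FS encoder with $s$ states. Then for every positive integer $\ell$ there exists a state $z\in\mathcal{Z}$ such that $$\sum_{x^\ell\in\mathcal{X}^\ell}2^{-L[f(z,x^\ell)]}\le 1.$$
   Context: A finite-state (FS) encoder is a quintuple $E=(\mathcal{X},\mathcal{Y},\mathcal{Z},f,g)$, where $\mathcal{X}$ is a finite source alphabet of size $\alpha$, $\mathcal{Y}$ is a finite set of binary strings (possibly containing the empty string, of length $0$), $\mathcal{Z}$ is a finite set of $s$ states, $f:\mathcal{Z}\times\mathcal{X}\to\mathcal{Y}$ is the output function and $g:\mathcal{Z}\times\mathcal{X}\to\mathcal{Z}$ is the next-state function. For $z\in\mathcal{Z}$ and $x^n=(x_1,\dots,x_n)\in\mathcal{X}^n$, set $z_1=z$, $z_{i+1}=g(z_i,x_i)$; write $g(z,x^n)=z_{n+1}$ and let $f(z,x^n)$ denote the binary string obtained by concatenating $f(z_1,x_1),\dots,f(z_n,x_n)$; its length is $L[f(z,x^n)]=\sum_{i=1}^n L[f(z_i,x_i)]$, where $L(\cdot)$ denotes the length of a binary string. The encoder is information lossless (IL) if for every $z\in\mathcal{Z}$ and every $n\ge1$, the map $x^n\mapsto (f(z,x^n),g(z,x^n))$ is injective on $\mathcal{X}^n$. The Kraft matrix of $E$ is the $s\times s$ nonnegative matrix $K$ with entries $K_{zz'}=\sum_{\{x\in\mathcal{X}:\ g(z,x)=z'\}}2^{-L[f(z,x)]}$. The encoder is called irreducible if $K$ is an irreducible matrix, equivalently, if for every $z,z'\in\mathcal{Z}$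 there exist $n\ge 1$ and $x^n$ with $g(z,x^n)=z'$. *)

(* Defs.v *)
From HB Require Import structures.
From mathcomp Require Import all_boot all_order all_algebra.
Set Implicit Arguments. Unset Strict Implicit. Unset Printing Implicit Defensive.
Import Order.TTheory GRing.Theory Num.Theory.

(* A finite-state encoder E = (X, Y, Z, f, g): X is the finite source
   alphabet, Z the finite state set, outputs are binary strings (seq bool;
   the output set Y is the finite image of f), f the output function and
   g the next-state function. *)

Section FSEncoder.
Variables (X Z : finType) (f : Z -> X -> seq bool) (g : Z -> X -> Z).

Fixpoint fout (z : Z) (xs : seq X) : seq bool :=
  match xs with
  | [::] => [::]
  | x :: xs' => f z x ++ fout (g z x) xs'
  end.

Fixpoint gnext (z : Z) (xs : seq X) : Z :=
  match xs with
  | [::] => z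
  | x :: xs' => gnext (g z x) xs'
  end.

Definition IL_encoder : Prop :=
  forall (z : Z) (n : nat), (0 < n)%N ->
    injective (fun w : n.-tuple X => (fout z w, gnext z w)).

Definition irreducible_encoder : Prop :=
  forall z z' : Z, exists (n : nat) (w : n.-tuple X),
    (0 < n)%N /\ gnext z w = z'.

End FSEncoder.

(* Main.v *)
Require Import Defs.
From HB Require Import structures.
From mathcomp Require Import all_boot all_order all_algebra.
From mathcomp Require Import zify ring lra.
Import Order.TTheory GRing.Theory Num.Theory.
Local Open Scope ring_scope.

Section Main.
Variables (R : realFieldType) (X Z : finType)
    (f : Z -> X -> seq bool) (g : Z -> X -> Z).

Lemma sum_tupleS n (F : seq X -> R) :
  \sum_(w : n.+1.-tuple X) F w = \sum_(x : X) \sum_(w : n.-tuple X) F (x :: w).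
Proof.
rewrite pair_bigA /=.
rewrite (reindex (fun p : X * n.-tuple X => [tuple of p.1 :: p.2])) //=.
exists (fun w : n.+1.-tuple X => (thead w, [tuple of behead w])).
  by case=> x w _ /=; rewrite theadE; congr pair; apply: val_inj.
by move=> w _; rewrite [RHS]tuple_eta.
Qed.

Lemma sum_tuple0 (F : seq X -> R) :
  \sum_(w : 0.-tuple X) F w = F [::].
Proof.
rewrite (eq_bigr (fun _ => F [::])); last by move=> w _; rewrite tuple0.
by rewrite sumr_const card_tuple expn0.
Qed.

Definition S n z : R := \sum_(w : n.-tuple X) ((2%:R : R) ^- size (fout f g z w)).

Lemma S_split a b z :
  S (a + b) z = \sum_(w : a.-tuple X) ((2%:R : R) ^- size (fout f g z w)) * S b (gnext g z w).
Proof.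
elim: a z => [|a IH] z.
  by rewrite add0n (sum_tuple0 (fun s => ((2%:R : R) ^- size (fout f g z s)) * S b (gnext g z s))) /= expr0 invr1 mul1r.
rewrite addSn {1}/S (sum_tupleS _ (fun s => (2%:R : R) ^- size (fout f g z s))).
rewrite (sum_tupleS _ (fun s => ((2%:R : R) ^- size (fout f g z s)) * S b (gnext g z s))).
apply: eq_bigr => x _.
under eq_bigr => w _ do rewrite /= size_cat exprD invfM.
rewrite -mulr_sumr -/(S (a+b) (g z x)) IH mulr_sumr; apply: eq_bigr => w _ /=.
by rewrite size_cat exprD invfM mulrA.
Qed.

Definition M := (\max_(p : Z * X) size (f p.1 p.2))%N.

Lemma size_fout z (w : seq X) : (size (fout f g z w) <= size w * M)%N.
Proof.
elim: w z => [|x w IH] z //=.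
rewrite size_cat mulSn leq_add //.
exact: (leq_bigmax (z, x)).
Qed.

Lemma S_upper n z : IL_encoder f g -> (0 < n)%N ->
  S n z <= (#|Z| * (n * M).+1)%:R.
Proof.
move=> IL n0.
rewrite /S (partition_big (fun w : n.-tuple X =>
   ((inord (size (fout f g z w)) : 'I_(n * M).+1), gnext g z w)) xpredT) //.
apply: (@le_trans _ _ (\sum_(j : 'I_(n * M).+1 * Z) (1 : R))); last first.
  by rewrite sumr_const card_prod card_ord mulnC.
apply: ler_sum => [[k z']] _.
have sk : forall w : n.-tuple X, (inord (size (fout f g z w)) : 'I_(n * M).+1, gnext g z w) == (k, z') ->
    size (fout f g z w) = k /\ gnext g z w = z'.
  move=> w /eqP [<- ->]; split => //; rewrite inordK // ltnS.
  by have := size_fout z w; rewrite size_tuple.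
rewrite (eq_bigr (fun _ => (2%:R : R) ^- k)); last first.
  by move=> w /= /sk [-> _].
rewrite sumr_const; set A := (X in #|X|).
rewrite -[_ *+ #|A|]mulr_natr.
have sk' : forall w, w \in A -> size (fout f g z w) = k /\ gnext g z w = z'.
  move=> w; rewrite unfold_in /= => /andP [/eqP e1 /eqP e2].
  split => //; rewrite -e1 inordK // ltnS.
  by have := size_fout z w; rewrite size_tuple.
have cA : (#|A| <= 2 ^ k)%N.
  have := @leq_card_in _ _ (fun w : n.-tuple X => insubd (nseq_tuple k false) (fout f g z w) : k.-tuple bool) A.
  rewrite card_tuple card_bool; apply => w1 w2 /sk' [s1 g1] /sk' [s2 g2] /(congr1 val).
  rewrite !val_insubd s1 s2 eqxx => e.
  apply: (IL z n n0); rewrite /= e; congr pair; by rewrite g1 g2.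
apply: (@le_trans _ _ ((2%:R : R) ^- k * (2 ^ k)%:R)).
  by rewrite ler_wpM2l ?invr_ge0 ?exprn_ge0 ?ler0n // ler_nat.
by rewrite natrX mulVf // expf_neq0 // pnatr_eq0.
Qed.

Lemma S_nat n z : exists N : nat, S n z * (2 ^ (n * M))%:R = N%:R.
Proof.
exists (\sum_(w : n.-tuple X) 2 ^ (n * M - size (fout f g z w)))%N.
rewrite /S mulr_suml natr_sum; apply: eq_bigr => w _.
have hs := size_fout z w; rewrite size_tuple in hs.
rewrite -{1}(subnK hs) expnD natrM !natrX mulrCA mulVf ?mulr1 //.
by rewrite expf_neq0 // pnatr_eq0.
Qed.

Lemma S0 z : S 0 z = 1.
Proof. by rewrite /S (sum_tuple0 (fun s => (2%:R : R) ^- size (fout f g z s))) /= expr0 invr1. Qed.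

Lemma S_lower l c : (forall z, c <= S l z) -> 0 <= c -> forall m z, c ^+ m <= S (m * l) z.
Proof.
move=> hc c0; elim=> [|m IH] z; first by rewrite mul0n S0 expr0.
rewrite mulSn S_split exprS.
apply: (@le_trans _ _ (S l z * c ^+ m)).
  by rewrite ler_wpM2r ?exprn_ge0.
rewrite [S l z]/S mulr_suml; apply: ler_sum => w _.
by rewrite ler_wpM2l ?invr_ge0 ?exprn_ge0 ?ler0n ?IH.
Qed.
End Main.

Lemma bern (R : realFieldType) (e : R) m : 0 <= e ->
  2 + 2 * m%:R * e + m%:R * (m%:R - 1) * e ^+ 2 <= 2 * (1 + e) ^+ m.
Proof.
move=> e0; elim: m => [|m IH].
  by rewrite expr0 mulr1 mulr0 !mul0r !addr0.
have hm : 0 <= m%:R * (m%:R - 1) :> R.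
  case: m {IH} => [|m]; first by rewrite mul0r.
  by rewrite mulr_ge0 ?ler0n // -natr1 addrK ler0n.
have p0 : 0 <= (1 + e) ^+ m by rewrite exprn_ge0 // addr_ge0.
rewrite [(1 + e) ^+ m.+1]exprS -[m.+1%:R]natr1.
have h3 : 0 <= m%:R * (m%:R - 1) * e ^+ 3 by rewrite mulr_ge0 // exprn_ge0.
have h := ler_wpM2l (addr_ge0 ler01 e0) IH.
move: IH h3 h p0 hm; set P := (1 + e) ^+ m; set k : R := m%:R => *.
lra.
Qed.


Lemma nat_contra (s D q m : nat) : (0 < s)%N -> (0 < q)%N -> m = (2 * s * (D+1) * q + 2)%N ->
  (m * (m - 1) <= 2 * (s * (m * D).+1) * q)%N -> False.
Proof. move=> s0 q0 ->. nia. Qed.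

Theorem mainTheorem4 (R : realFieldType) (X Z : finType)
    (f : Z -> X -> seq bool) (g : Z -> X -> Z) :
  (0 < #|Z|)%N ->
  IL_encoder f g ->
  irreducible_encoder g ->
  forall l : nat, (0 < l)%N ->
  exists z : Z,
    \sum_(w : l.-tuple X) ((2%:R : R) ^- size (fout f g z w)) <= 1.
Proof.
move=> Zpos IL _ l l0.
case: (boolP [exists z, @S R X Z f g l z <= 1]) => [/existsP [z hz] | H].
  by exists z.
exfalso.
have H1 : forall z, 1 < @S R X Z f g l z.
  by move=> z; move/existsPn: H => /(_ z); rewrite -ltNge.
set D := (l * M X Z f)%N.
set q : R := (2 ^ D)%:R.
have q0 : 0 < q by rewrite ltr0n expn_gt0.
set e := q^-1.
have e0 : 0 <= e by rewrite invr_ge0 ltW.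
have H2 : forall z, 1 + e <= @S R X Z f g l z.
  move=> z; have [N hN] := S_nat R X Z f g l z.
  have hS : @S R X Z f g l z = N%:R / q by rewrite -hN mulfK // gt_eqF.
  have hlt : (2 ^ D < N)%N.
    rewrite -(ltr_nat R) -hN -/q.
    have := H1 z; nra.
  rewrite hS ler_pdivlMr // mulrDl mul1r mulVf ?gt_eqF //.
  by rewrite /q natr1 ler_nat.
case/card_gt0P: Zpos => z0 _.
set s := #|Z|.
set m := (2 * s * (D + 1) * (2 ^ D) ^ 2 + 2)%N.
have hl := @S_lower R X Z f g l (1 + e) H2 (addr_ge0 ler01 e0) m z0.
have ml0 : (0 < m * l)%N by rewrite muln_gt0 l0 andbT /m addn2.
have hu := @S_upper R X Z f g (m * l) z0 IL ml0.
have hb := @bern R e m e0.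
have m1 : (1 <= m)%N by rewrite /m addn2.
have me0 : 0 <= 2 * m%:R * e by rewrite mulr_ge0 // mulr_ge0 // ler0n.
have key : (m * (m - 1))%:R * e ^+ 2 <= (2 * (s * (m * l * M X Z f).+1))%:R :> R.
  rewrite natrM natrB // [(2 * _)%:R]natrM.
  move: hb hl hu me0; set U := ((_ * _)%:R : R); set c := (1 + e) ^+ m.
  set SS := S _ _ _ _; move=> *; lra.
have : (m * (m - 1))%:R <= (2 * (s * (m * D).+1) * (2 ^ D) ^ 2)%:R :> R.
  rewrite [X in _ <= X]natrM natrX -/q.
  rewrite -mulnA -/D in key.
  have q2 : 0 < q ^+ 2 by rewrite exprn_gt0.
  by move: key; rewrite /e exprVn ler_pdivrMr.
rewrite ler_nat => hn.
apply: (@nat_contra s D ((2 ^ D) ^ 2) m _ _ _ hn) => //.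
  by rewrite /s; apply/card_gt0P; exists z0.
by rewrite expn_gt0 expn_gt0.
Qed.
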